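(* Let $U$ be a regular molecule. Then (1) if $U$ is acyclic, it is dimension-wise acyclic; (2) if $U$ is dimension-wise acyclic, it is frame-acyclic.
   Context: All posets are finite; $y$ covers $x$ if $x<y$ with nothing strictly between. A finite poset is graded if for each $x$ all maximal covering chains descending from $x$ have the same length $\dim x$; $U_n$ denotes elements of dimension $n$. An oriented graded poset is a finite graded poset with a label $\pm$ on each covering pair; $\Delta^\alpha x$ ($\nabla^\alpha x$) is the set of elements covered by (covering) $x$ with label $\alpha$. For closed (downward closed) $U$, with $\mathrm{cl}$ downward closure, $\max U$ maximal elements, $\dim U$ maximal dimension ($-1$ if empty): $\Delta^\alpha_nU=\{x\in U_n:\nabla^{-\alpha}x\cap U=\emptyset\}$, $\partial^\alpha_nU=\mathrm{cl}(\Delta^\alpha_nU)\cup\bigcup_{j<n}\mathrm{cl}((\max U)_j)$ ($\emptyset$ for $n<0$), $\partial_nU=\partial^-_nU\cup\partial^+_nU$, subscript omitted for $n=\dim U-1$; $\Delta^\alpha_kx:=\Delta^\alpha_k\mathrm{cl}\{x\}$. Maps are functions with $f(\partial^\alpha_n\mathrm{cl}\{x\})=\partial^\alpha_n\mathrm{cl}\{f(x)\}$; inclusions are injective maps. $U\#_kV$ is the pushout of $U\hookleftarrow\partial^+_kU\cong\partial^-_kV\hookrightarrow V$; for $U,V$ of equal dimension $n$ with $\partial U\cong\partial V$ compatibly with $\partial^\pm$, $U\Rightarrow V$ is that pushout with a new element $\top$ of dimension $n+1$, $\Delta^-\top=U_n$, $\Delta^+\top=V_n$. $U$ is round if $\partial^-_nU\cap\partial^+_nU=\partial_{n-1}U$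 for all $n<\dim U$. Regular molecules: smallest isomorphism-closed class containing the point, closed under $U\#_kV$ ($k<\min(\dim U,\dim V)$) and $U\Rightarrow V$ for round regular molecules of equal dimension. Submolecule inclusions: smallest class of inclusions of regular molecules containing isomorphisms and $U\hookrightarrow U\#_kV\hookleftarrow V$, closed under composition; $V\sqsubseteq U$ if $V$ is closed and its inclusion is a submolecule inclusion. The oriented Hasse diagram of $U$ has vertex set $U$ and an edge from $y$ to $x$ iff $y\in\Delta^-x$ or $x\in\Delta^+y$; $U$ is acyclic if this graph is acyclic. $\mathcal F_kU$ ($k$-flow graph): vertices $\bigcup_{i>k}U_i$, edge $x\to y$ iff $\Delta^+_kx\cap\Delta^-_ky\ne\emptyset$; $U$ is dimension-wise acyclic if $\mathcal F_kU$ is acyclic for all $k\in\mathbb N$. $\mathcal M_kU$: induced subgraph of $\mathcal F_kU$ on $\bigcup_{i>k}(\max U)_i$. $\mathrm{frdim}\,U$ is the dimension of $\bigcup\{\mathrm{cl}\{x\}\cap\mathrm{cl}\{y\}:x\ne y\in\max U\}$. $U$ is frame-acyclic if for all $V\sqsubseteq U$, $\mathcal M_{\mathrm{frdim}V}V$ is acyclic. *)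

(* Defs.v *)
(* Oriented graded posets, regular molecules and acyclicity
   notions, following the paper's definitions (labels: false = -, true = +). *)
From HB Require Import structures.
From mathcomp Require Import all_boot all_order all_algebra.
Set Implicit Arguments. Unset Strict Implicit. Unset Printing Implicit Defensive.
Import GRing.Theory Num.Theory.

(* An oriented graded poset: a finite set with, for each x and label a,
   the set [face a x] = Delta^a x of elements covered by x with label a.
   The partial order is the reflexive-transitive closure of the covering
   relation.  [dim] is the grading: covering lowers dim by exactly one and
   elements covering nothing have dim 0, so that dim x is the common length
   of all maximal descending covering chains from x. *)
Record ogposet := OGPoset {
  ogcar :> finType;
  face : bool -> ogcar -> {set ogcar};
  dim : ogcar -> nat;
  face_disj : forall x : ogcar, [disjoint face false x & face true x];
  face_dim : forall (a : bool) (x y : ogcar), y \in face a x -> dim x = (dim y).+1;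
  noface_dim : forall x : ogcar, face false x :|: face true x = set0 -> dim x = 0
}.
Arguments face {o} a x.
Arguments dim {o} x.

Section OGDefs.
Variable P : ogposet.
Implicit Types (A : {set P}) (x y : P).

Definition faces x : {set P} := face false x :|: face true x.
Definition cofaces (a : bool) x : {set P} := [set y : P | x \in face a y].
Definition below x y : bool := connect (fun u v : P => v \in faces u) y x.
Definition cl A : {set P} := [set x : P | [exists y in A, below x y]].
Definition closed A : Prop := cl A \subset A.
Definition sdim A : int :=
  if A == set0 then (-1)%R else Posz (\max_(x in A) dim x)%N.
Definition layer A (n : int) : {set P} := [set x in A | Posz (dim x) == n].
Definition maxel A : {set P} := [set x in A | [forall y in A, below x y ==> (y == x)]].
Definition Delta (a : bool) (n : int) A : {set P} :=
  [set x in layer A n | [disjoint cofaces (~~ a) x & A]].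
Definition bd (a : bool) (n : int) A : {set P} :=
  if (n < 0)%R then set0
  else cl (Delta a n A) :|: cl [set x in maxel A | (Posz (dim x) < n)%R].
Definition bd2 (n : int) A : {set P} := bd false n A :|: bd true n A.
Definition round A : Prop :=
  forall n : nat, ((Posz n) < sdim A)%R ->
    bd false (Posz n) A :&: bd true (Posz n) A = bd2 ((Posz n) - 1)%R A.

Definition acyclic_on (S : {set P}) (e : rel P) : Prop :=
  forall (x : P) (p : seq P), x \in S -> all (mem S) p -> path e x p ->
    last x p = x -> p = [::].

Definition hasse_edge : rel P :=
  fun y x => (y \in face false x) || (x \in face true y).
Definition og_acyclic : Prop := acyclic_on [set: P] hasse_edge.

Definition DeltaK (a : bool) (k : int) x : {set P} := Delta a k (cl [set x]).
Definition flow_vert (k : int) A : {set P} := [set x in A | (k < Posz (dim x))%R].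
Definition flow_edge (k : int) : rel P :=
  fun x y => DeltaK true k x :&: DeltaK false k y != set0.
Definition dimwise_acyclic : Prop :=
  forall k : nat, acyclic_on (flow_vert (Posz k) [set: P]) (flow_edge (Posz k)).

Definition frdim A : int :=
  sdim (\bigcup_(x in maxel A) \bigcup_(y in maxel A | y != x)
          (cl [set x] :&: cl [set y])).
Definition M_frdim_acyclic A : Prop :=
  acyclic_on (flow_vert (frdim A) (maxel A)) (flow_edge (frdim A)).

End OGDefs.

Definition ogmap (P Q : ogposet) (f : P -> Q) : Prop :=
  forall (x : P) (a : bool) (n : nat),
    f @: bd a (Posz n) (cl [set x]) = bd a (Posz n) (cl [set f x]).
Definition inclusion (P Q : ogposet) (f : P -> Q) : Prop :=
  ogmap f /\ injective f.
Definition ogiso (P Q : ogposet) (f : P -> Q) : Prop :=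
  exists g : Q -> P, [/\ cancel f g, cancel g f, ogmap f & ogmap g].
(* isomorphism between closed subsets A of P and B of Q (with the induced
   oriented graded structure): an orientation-preserving bijection A -> B *)
Definition subiso (P Q : ogposet) (A : {set P}) (B : {set Q}) (phi : P -> Q) : Prop :=
  [/\ {in A &, injective phi}, phi @: A = B &
      forall (a : bool), {in A, forall x : P, phi @: face a x = face a (phi x)}].

(* ---------- pasting U #_k V (specified up to isomorphism) ----------
   W with i : U -> W, j : V -> W is (isomorphic to) the pushout of
   U <- bd^+_k U ~= bd^-_k V -> V, with i, j the pushout injections. *)
Definition paste_incl (k : nat) (U V W : ogposet) (i : U -> W) (j : V -> W) : Prop :=
  [/\ inclusion i, inclusion j &
    exists phi : U -> V,
      [/\ subiso (bd true (Posz k) [set: U]) (bd false (Posz k) [set: V]) phi,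
          (forall u v, i u = j v <-> (u \in bd true (Posz k) [set: U] /\ phi u = v)) &
          (forall w, (exists u, i u = w) \/ (exists v, j v = w))]].

Definition atom_incl (U V W : ogposet) (i : U -> W) (j : V -> W) (top : W) : Prop :=
  [/\ inclusion i, inclusion j &
    exists phi : U -> V,
      [/\ subiso (bd2 (sdim [set: U] - 1)%R [set: U]) (bd2 (sdim [set: V] - 1)%R [set: V]) phi,
          (forall a, phi @: bd a (sdim [set: U] - 1)%R [set: U]
                     = bd a (sdim [set: V] - 1)%R [set: V]),
          (forall u v, i u = j v <->
              (u \in bd2 (sdim [set: U] - 1)%R [set: U] /\ phi u = v)),
          (forall w, [\/ exists u, i u = w, exists v, j v = w | w = top]) &
          [/\ (forall u, i u <> top), (forall v, j v <> top),
              face false top = i @: layer [set: U] (sdim [set: U]) &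
              face true top = j @: layer [set: V] (sdim [set: V])]]].

Inductive regmol : ogposet -> Prop :=
| rm_point (P : ogposet) : #|P| = 1 -> regmol P
| rm_iso (P Q : ogposet) (f : P -> Q) : ogiso f -> regmol P -> regmol Q
| rm_paste (k : nat) (U V W : ogposet) (i : U -> W) (j : V -> W) :
    regmol U -> regmol V ->
    ((Posz k) < sdim [set: U])%R -> ((Posz k) < sdim [set: V])%R ->
    paste_incl k i j -> regmol W
| rm_atom (U V W : ogposet) (i : U -> W) (j : V -> W) (top : W) :
    regmol U -> regmol V -> round [set: U] -> round [set: V] ->
    sdim [set: U] = sdim [set: V] ->
    atom_incl i j top -> regmol W.

Inductive submol : forall P Q : ogposet, (P -> Q) -> Prop :=
| sm_iso (P Q : ogposet) (f : P -> Q) :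
    regmol P -> regmol Q -> ogiso f -> submol f
| sm_left (k : nat) (U V W : ogposet) (i : U -> W) (j : V -> W) :
    regmol U -> regmol V -> regmol W -> paste_incl k i j -> submol i
| sm_right (k : nat) (U V W : ogposet) (i : U -> W) (j : V -> W) :
    regmol U -> regmol V -> regmol W -> paste_incl k i j -> submol j
| sm_comp (P Q R : ogposet) (f : P -> Q) (g : Q -> R) :
    submol f -> submol g -> submol (g \o f).

Section SubOg.
Variables (P : ogposet) (V : {set P}) (hV : closed V).

Definition subcar : finType := {x : P | x \in V}.
Definition subface (a : bool) (x : subcar) : {set subcar} :=
  [set y : subcar | val y \in face a (val x)].
Definition subdim (x : subcar) : nat := dim (val x).

Lemma subface_disj (x : subcar) : [disjoint subface false x & subface true x].
Proof.
rewrite disjoint_subset; apply/subsetP => y; rewrite !inE => h1.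
by rewrite (disjointFr (face_disj (val x)) h1).
Qed.

Lemma subface_dim a (x y : subcar) : y \in subface a x -> subdim x = (subdim y).+1.
Proof. by rewrite inE => /face_dim. Qed.

Lemma subnoface_dim (x : subcar) :
  subface false x :|: subface true x = set0 -> subdim x = 0.
Proof.
move=> h; apply: noface_dim; apply/setP => y; rewrite !inE.
apply/negbTE/negP => hy.
have yV : y \in V.
  apply: (subsetP hV); rewrite inE; apply/existsP; exists (val x).
  rewrite (valP x) /=; apply: connect1; rewrite /faces inE.
  by case/orP: hy => ->; rewrite ?orbT.
move/setP: h => /(_ (exist _ y yV)); rewrite !inE /=.
by case/orP: hy => ->; rewrite ?orbT.
Qed.

Definition sub_og : ogposet :=
  @OGPoset subcar subface subdim subface_disj subface_dim subnoface_dim.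
Definition sub_incl : sub_og -> P := fun x => val x.
End SubOg.

Definition frame_acyclic (U : ogposet) : Prop :=
  forall (V : {set U}) (hV : closed V),
    submol (@sub_incl U V hV) -> M_frdim_acyclic [set: sub_og hV].

(* Main.v *)
Require Import Defs.
From mathcomp Require Import all_boot all_order all_algebra.
Require Import Defs.
From mathcomp Require Import zify.
Set Implicit Arguments. Unset Strict Implicit. Unset Printing Implicit Defensive.
Import GRing.Theory Num.Theory.

Section Basic.
Variable P : ogposet.
Implicit Types (x y z : P) (A : {set P}).

Definition frel : rel P := fun u v => v \in faces u.

Lemma faces_dim x y : y \in faces x -> dim x = (dim y).+1.
Proof. by rewrite /faces inE => /orP [] /face_dim. Qed.

Lemma path_dim x p : path frel x p -> dim (last x p) + size p = dim x.
Proof.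
elim: p x => [|a p IH] x /=; first by rewrite addn0.
case/andP => h1 h2; rewrite (faces_dim h1) -(IH _ h2) addnS.
by [].
Qed.

Lemma below_dim y x : below y x -> dim y <= dim x.
Proof. by case/connectP => p pth ->; rewrite -(path_dim pth) leq_addr. Qed.

Lemma below_eq y x : below y x -> dim y = dim x -> y = x.
Proof.
case/connectP => p pth ->; move: (path_dim pth).
case: p pth => [|a p] //= _ h1 h2; lia.
Qed.

Lemma below_face y x : below y x -> dim x = (dim y).+1 -> y \in faces x.
Proof.
case/connectP => p pth ->; move: (path_dim pth).
case: p pth => [|a [|b p]] /=.
- move=> _ h1 h2; lia.
- by rewrite andbT => h _.
- move=> _ h1 h2; lia.
Qed.

Lemma below_refl x : below x x.
Proof. exact: connect0. Qed.

Lemma below_trans x y z : below x y -> below y z -> below x z.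
Proof. rewrite /below => h1 h2; exact: connect_trans h2 h1. Qed.

Lemma below_faceW y x : y \in faces x -> below y x.
Proof. by move=> h; apply: connect1. Qed.

Lemma below_antisym x y : below x y -> below y x -> x = y.
Proof.
move=> h1 h2; have d1 := below_dim h1; have d2 := below_dim h2.
apply: below_eq h1 _; apply/eqP; rewrite eqn_leq.
by rewrite d1 d2.
Qed.

Lemma in_cl1 z x : (z \in cl [set x]) = below z x.
Proof.
rewrite inE; apply/existsP/idP => [[y /andP [] /set1P -> //]|h].
by exists x; rewrite set11.
Qed.

Lemma clP z A : reflect (exists2 y, y \in A & below z y) (z \in cl A).
Proof.
rewrite inE; apply: (iffP existsP) => [[y /andP [h1 h2]]|[y h1 h2]].
  by exists y.
by exists y; rewrite h1.
Qed.

Lemma cl_sub A : A \subset cl A.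
Proof. by apply/subsetP => x h; apply/clP; exists x => //; apply: below_refl. Qed.

Lemma cl_down A y z : y \in cl A -> below z y -> z \in cl A.
Proof.
by case/clP => w h1 h2 h3; apply/clP; exists w => //; apply: below_trans h3 h2.
Qed.

Lemma cl_mono A (B : {set P}) : A \subset B -> cl A \subset cl B.
Proof.
move=> /subsetP h; apply/subsetP => z /clP [w h1 h2]; apply/clP; exists w => //.
exact: h.
Qed.

Lemma cl_cl A : cl (cl A) = cl A.
Proof.
apply/eqP; rewrite eqEsubset cl_sub andbT; apply/subsetP => z /clP [w h1 h2].
exact: cl_down h1 h2.
Qed.

Lemma bd_dim a (m : int) A y : y \in bd a m A -> exists2 n : nat, m = Posz n & dim y <= n.
Proof.
rewrite /bd; case: m => [n|n] /=; last by rewrite inE.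
rewrite inE => /orP [] /clP [w]; rewrite !inE.
- case/andP => /andP [_ /eqP hw] _ /below_dim h; exists n => //.
  by case: hw => <-.
- case/andP => _; rewrite ltz_nat => hw /below_dim h; exists n => //.
  exact: leq_trans h (ltnW hw).
Qed.

Lemma maxel_cl1 x : x \in maxel (cl [set x]).
Proof.
rewrite inE in_cl1 below_refl /=; apply/forall_inP => y; rewrite in_cl1 => h1.
by apply/implyP => h2; rewrite (below_antisym h1 h2).
Qed.

Lemma inDelta a m A x :
  (x \in Delta a m A) = [&& x \in A, Posz (dim x) == m & [disjoint cofaces (~~a) x & A]].
Proof. by rewrite /Delta /layer !inE andbA. Qed.

Lemma incofaces a x y : (y \in cofaces a x) = (x \in face a y).
Proof. by rewrite inE. Qed.

Lemma inmaxel A x : (x \in maxel A) = (x \in A) && [forall y in A, below x y ==> (y == x)].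
Proof. by rewrite inE. Qed.

Lemma bd_nat a (n : nat) A :
  bd a (Posz n) A = cl (Delta a (Posz n) A) :|: cl [set x in maxel A | (Posz (dim x) < Posz n)%R].
Proof. by rewrite /bd. Qed.

Lemma bd_sub a m A : bd a m A \subset cl A.
Proof.
rewrite /bd; case: ifP => _; first exact: sub0set.
apply/subsetP => z; rewrite in_setU => /orP [] h.
all: move: h => /clP [w hw h2]; apply/clP; exists w => //; move: hw; rewrite !inE => /andP [/andP [] ] //.
Qed.

Lemma bd_full a (n : nat) x : dim x <= n -> bd a (Posz n) (cl [set x]) = cl [set x].
Proof.
move=> hn; apply/eqP; rewrite eqEsubset; apply/andP; split.
  by rewrite -{2}cl_cl bd_sub.
have hx : x \in bd a (Posz n) (cl [set x]).
  rewrite bd_nat in_setU; move: hn; rewrite leq_eqVlt => /orP [/eqP hd|hlt].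
  - apply/orP; left; apply/clP; exists x; last exact: below_refl.
    rewrite inDelta in_cl1 below_refl /= hd eqxx /=.
    rewrite disjoint_subset; apply/subsetP => w; rewrite incofaces inE in_cl1 => hw.
    apply/negP => hb; move: (below_dim hb); rewrite (face_dim hw) ltnn //.
  - apply/orP; right; apply/clP; exists x; last exact: below_refl.
    by rewrite inE maxel_cl1 ltz_nat hlt.
apply/subsetP => z; rewrite in_cl1 => hz; move: hx.
rewrite bd_nat !in_setU => /orP [] h; apply/orP; [left|right]; exact: cl_down h hz.
Qed.

End Basic.

Lemma connect_map (T T' : finType) (f : T -> T') (e : rel T) (e' : rel T') :
  (forall x y, e x y -> e' (f x) (f y)) ->
  forall x y, connect e x y -> connect e' (f x) (f y).
Proof.
move=> H x y /connectP [p pth ->]; elim: p x pth => [|a p IH] x /=.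
  by rewrite connect0.
case/andP => h1 h2; exact: connect_trans (connect1 (H _ _ h1)) (IH _ h2).
Qed.

Lemma disjF (T : finType) (A B : {set T}) x :
  [disjoint A & B] -> x \in A -> x \in B -> False.
Proof. by move=> /disjoint_setI0 /setP /(_ x); rewrite !inE => h ha hb; rewrite ha hb in h. Qed.

Lemma disjI (T : finType) (A B : {set T}) :
  (forall x, x \in A -> x \in B -> False) -> [disjoint A & B].
Proof.
move=> h; rewrite -setI_eq0; apply/eqP/setP => x; rewrite !inE.
by apply/negP => /andP [] /h H /H.
Qed.

Section Maps.
Variables (P Q : ogposet) (f : P -> Q).
Hypotheses (fm : ogmap f) (finj : injective f).

Lemma ogmap_cl (x : P) : f @: cl [set x] = cl [set f x].
Proof.
have h := fm x true (maxn (dim x) (dim (f x))).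
by rewrite !bd_full ?leq_maxl ?leq_maxr // in h.
Qed.

Lemma ogmap_dim (x : P) : dim (f x) = dim x.
Proof.
apply/eqP; rewrite eqn_leq; apply/andP; split; rewrite leqNgt; apply/negP => hlt.
- have h := fm x true (dim x).
  rewrite bd_full // ogmap_cl in h.
  have : f x \in cl [set f x] by rewrite in_cl1 below_refl.
  rewrite h => /bd_dim [n [<-]] hn.
  by move: (leq_trans hlt hn); rewrite ltnn.
- have h := fm x true (dim (f x)).
  rewrite [in RHS]bd_full // in h.
  have : f x \in cl [set f x] by rewrite in_cl1 below_refl.
  rewrite -h => /imsetP [y /bd_dim [n [<-]] hn] /finj hy.
  by move: hn; rewrite -hy leqNgt hlt.
Qed.

Lemma bd_face (R : ogposet) (x y : R) a : dim x = (dim y).+1 ->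
  (y \in bd a (Posz (dim y)) (cl [set x])) = (y \in face a x).
Proof.
move=> hd; apply/idP/idP => h.
- move: h; rewrite bd_nat in_setU => /orP [] /clP [w].
  + rewrite inDelta => /and3P [hw /eqP [hdw] hdis] hyw.
    have ew := below_eq hyw (esym hdw); subst w.
    rewrite in_cl1 in hw; have := below_face hw hd.
    rewrite /faces in_setU; case: a hdis => hdis /orP [] // hf;
      by case: (disjF (x := x) hdis); rewrite ?incofaces ?hf // in_cl1 below_refl.
  + rewrite inE ltz_nat => /andP [_ hlt] /below_dim hle.
    by move: (leq_trans hlt hle); rewrite ltnn.
- rewrite bd_nat in_setU; apply/orP; left; apply/clP; exists y; last exact: below_refl.
  rewrite inDelta in_cl1 below_faceW ?eqxx /=; last by rewrite /faces in_setU; case: (a) h => ->; rewrite ?orbT.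
  apply: disjI => w; rewrite incofaces in_cl1 => hw hb; have := below_dim hb; rewrite (face_dim hw) => hle.
  have ew : w = x.
    apply: below_eq hb _; move: (face_dim hw); lia.
  subst w; case: (disjF (x := y) (face_disj x)).
  by case: a h hw => h hw.
  by case: a h hw => h hw.
Qed.

Lemma ogmap_face a (x : P) : f @: face a x = face a (f x).
Proof.
apply/setP => y'; apply/imsetP/idP => [[y hy ->]|hy'].
- have hd := face_dim hy.
  rewrite -bd_face ?ogmap_dim // -(fm x a (dim y)).
  by apply/imsetP; exists y => //; rewrite bd_face.
- have hd := face_dim hy'.
  have : y' \in bd a (Posz (dim y')) (cl [set f x]) by rewrite bd_face.
  rewrite -(fm x a (dim y')) => /imsetP [y hy ey]; exists y => //.
  subst y'; rewrite ogmap_dim in hy hd; rewrite -bd_face //.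
  by rewrite -(ogmap_dim x).
Qed.

Lemma ogmap_faceS a (x y : P) : y \in face a x -> f y \in face a (f x).
Proof. by move=> h; rewrite -ogmap_face; apply/imsetP; exists y. Qed.

Lemma ogmap_faceR a (x y : P) : f y \in face a (f x) -> y \in face a x.
Proof. by rewrite -ogmap_face => /imsetP [y' h /finj ->]. Qed.

Lemma ogmap_below (x y : P) : below x y -> below (f x) (f y).
Proof.
rewrite /below; apply: connect_map => u v; rewrite /faces !in_setU.
by case/orP => /ogmap_faceS -> //; rewrite orbT.
Qed.

Lemma ogmap_hasse (x y : P) : connect (@hasse_edge P) x y -> connect (@hasse_edge Q) (f x) (f y).
Proof.
apply: connect_map => u v; rewrite /hasse_edge.
by case/orP => /ogmap_faceS -> //; rewrite orbT.
Qed.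

End Maps.

Definition Aat (P : ogposet) (x : P) := forall z, z \in cl [set x] ->
  ([disjoint cofaces false z & cl [set x]] -> connect (@hasse_edge P) x z) /\
  ([disjoint cofaces true z & cl [set x]] -> connect (@hasse_edge P) z x).
Definition Aprop (P : ogposet) := forall x : P, Aat x.

Lemma A_transport (P Q : ogposet) (f : P -> Q) : ogmap f -> injective f ->
  Aprop P -> forall x, Aat (f x).
Proof.
move=> fm finj hA x z hz.
have /imsetP [z' hz' ez] : z \in f @: cl [set x] by rewrite ogmap_cl.
subst z.
have tr b : [disjoint cofaces b (f z') & cl [set f x]] -> [disjoint cofaces b z' & cl [set x]].
  move=> hd; apply: disjI => w; rewrite incofaces in_cl1 => hw hb.
  apply: (disjF (x := f w) hd); first by rewrite incofaces (ogmap_faceS fm finj).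
  by rewrite in_cl1 (ogmap_below fm finj).
have [h1 h2] := hA x z' hz'; split => h.
- exact: (ogmap_hasse fm finj) (h1 (tr _ h)).
- exact: (ogmap_hasse fm finj) (h2 (tr _ h)).
Qed.

Section Round.
Variable P : ogposet.
Implicit Types (x y z : P) (A : {set P}).

Lemma sdim_ne A x : x \in A -> sdim A = Posz (\max_(y in A) dim y).
Proof. by rewrite /sdim; case: eqP => // ->; rewrite in_set0. Qed.

Lemma sdim_le A x (n : nat) : sdim A = Posz n -> x \in A -> dim x <= n.
Proof. by move=> hs hx; move: hs; rewrite (sdim_ne hx) => [[<-]]; apply: leq_bigmax_cond. Qed.

Lemma exists_max (v : P) : exists2 y, y \in maxel [set: P] & below v y.
Proof.
case: (@arg_maxnP P v (below v) (@dim P) (below_refl v)) => y hy hmax.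
exists y => //; rewrite inmaxel in_setT /=; apply/forall_inP => w _; apply/implyP => hw.
have hvw := below_trans hy hw; have := hmax _ hvw; have := below_dim hw => h1 h2.
by apply/eqP; symmetry; apply: below_eq hw _; move: h1 h2 => /= h1 h2; lia.
Qed.

Lemma maxel_Delta a y : y \in maxel [set: P] -> y \in Delta a (Posz (dim y)) [set: P].
Proof.
rewrite inmaxel in_setT => /forall_inP hm; rewrite inDelta in_setT eqxx /=.
apply: disjI => w; rewrite incofaces => hw _.
have := hm w (in_setT w); rewrite below_faceW; last by rewrite /faces in_setU; case: (~~ a) hw => ->; rewrite ?orbT.
move=> /eqP ew; subst w; move: (face_dim hw); lia.
Qed.

Lemma Delta_bd a (k : nat) A y : y \in Delta a (Posz k) A -> y \in bd a (Posz k) A.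
Proof.
by move=> h; rewrite bd_nat in_setU; apply/orP; left; apply/clP; exists y => //; apply: below_refl.
Qed.

Lemma round_pure (n : nat) y : round [set: P] -> sdim [set: P] = Posz n ->
  y \in maxel [set: P] -> dim y = n.
Proof.
move=> hr hs hy; have hle := sdim_le hs (in_setT y).
move: hle; rewrite leq_eqVlt => /orP [/eqP //|hlt].
have := hr (dim y); rewrite hs ltz_nat => /(_ hlt) /setP /(_ y).
rewrite in_setI !Delta_bd ?maxel_Delta // /bd2 in_setU => /esym /orP [] /bd_dim [m hm hd]; lia.
Qed.

Lemma round_step (k : nat) : round [set: P] -> (Posz k.+1 < sdim [set: P])%R ->
  bd2 (Posz k) [set: P] \subset bd2 (Posz k.+1) [set: P].
Proof.
move=> hr /hr; rewrite -addn1 PoszD addrK => <-.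
by rewrite /bd2; apply: subset_trans (subsetIl _ _) (subsetUl _ _).
Qed.

Lemma round_chain (k d : nat) : round [set: P] -> (Posz (k + d) < sdim [set: P])%R ->
  bd2 (Posz k) [set: P] \subset bd2 (Posz (k + d)) [set: P].
Proof.
move=> hr; elim: d => [|d IH] h; first by rewrite addn0.
rewrite addnS in h *; apply: subset_trans (IH _) (round_step hr h).
by apply: Order.POrderTheory.lt_trans h; rewrite ltz_nat.
Qed.

Lemma round_Delta (n k : nat) a u : round [set: P] -> sdim [set: P] = Posz n -> k < n ->
  u \in Delta a (Posz k) [set: P] -> u \in bd2 (sdim [set: P] - 1)%R [set: P].
Proof.
move=> hr hs hk hu.
have e : (sdim [set: P] - 1)%R = Posz (k + (n.-1 - k)) by rewrite hs; lia.
rewrite e; apply: (subsetP (round_chain hr _)).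
  by rewrite hs ltz_nat; lia.
by rewrite /bd2 in_setU; case: (a) hu => /Delta_bd ->; rewrite ?orbT.
Qed.

End Round.

Section Atom.
Variables (U W : ogposet) (i : U -> W) (top : W) (b : bool).
Hypotheses (im : ogmap i) (iinj : injective i) (hr : round [set: U])
  (hf : face b top = i @: layer [set: U] (sdim [set: U])).

Lemma top_face_dim (N : nat) u : sdim [set: U] = Posz N -> dim u = N -> i u \in face b top.
Proof. move=> hs hd; rewrite hf; apply/imsetP; exists u; last by []. by rewrite /layer !inE hd hs eqxx. Qed.

Lemma below_top u : below (i u) top.
Proof.
case: (exists_max u) => y hy huy; have hs := sdim_ne (in_setT u).
have hd := round_pure hr hs hy.
apply: below_trans (ogmap_below im iinj huy) (below_faceW _).
by rewrite /faces in_setU; move: (top_face_dim hs hd); case: b => ->; rewrite ?orbT.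
Qed.

Lemma nocof c u : [disjoint cofaces c (i u) & cl [set top]] -> [disjoint cofaces c u & [set: U]].
Proof.
move=> hd; apply: disjI => w; rewrite incofaces => hw _.
apply: (disjF (x := i w) hd); first by rewrite incofaces (ogmap_faceS im iinj).
by rewrite in_cl1 below_top.
Qed.

End Atom.

Lemma A_top (U V W : ogposet) (i : U -> W) (j : V -> W) (top : W) :
  Aprop U -> Aprop V -> round [set: U] -> round [set: V] ->
  sdim [set: U] = sdim [set: V] -> atom_incl i j top -> Aat top.
Proof.
move=> AU AV hrU hrV hsd [[im iinj] [jm jinj] [phi [hsub hbd hij hcov [hi hj hfm hfp]]]].
case: hsub => _ hphi _.
move=> z hz; case: (eqVneq z top) => [->|ztop].
  by split=> _; apply: connect0.
split => hdis.
-
  suff [v ev] : exists v, z = j v.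
    subst z; have hv := nocof jm jinj hrV hfp hdis.
    case: (exists_max v) => y hy hvy.
    have hs := sdim_ne (in_setT v); have hd := round_pure hrV hs hy.
    have [h1 _] : _ /\ _ := AV y v (ltac:(by rewrite in_cl1)).
    have h2 : [disjoint cofaces false v & cl [set y]].
      by apply: disjI => w hw _; apply: (disjF hv hw); rewrite in_setT.
    apply: connect_trans (connect1 _) (ogmap_hasse jm jinj (h1 h2)).
    by rewrite /hasse_edge (top_face_dim hfp hs hd) orbT.
  case: (hcov z) => [[u eu]|[v ev]|ez]; last 1 first.
  + by rewrite ez eqxx in ztop.
  + subst z; have hu := nocof im iinj hrU hfm hdis.
    have hs := sdim_ne (in_setT u); have hle := sdim_le hs (in_setT u).
    move: hle; rewrite leq_eqVlt => /orP [/eqP hd|hlt].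
      case: (disjF (x := top) hdis); first by rewrite incofaces (top_face_dim hfm hs hd).
      by rewrite in_cl1 below_refl.
    have hD : u \in Delta true (Posz (dim u)) [set: U] by rewrite inDelta in_setT eqxx.
    have hb := round_Delta hrU hs hlt hD.
    by exists (phi u); apply/hij.
  + by exists v.
- suff [u eu] : exists u, z = i u.
    subst z; have hu := nocof im iinj hrU hfm hdis.
    case: (exists_max u) => y hy huy.
    have hs := sdim_ne (in_setT u); have hd := round_pure hrU hs hy.
    have [_ h1] : _ /\ _ := AU y u (ltac:(by rewrite in_cl1)).
    have h2 : [disjoint cofaces true u & cl [set y]].
      by apply: disjI => w hw _; apply: (disjF hu hw); rewrite in_setT.
    apply: connect_trans (ogmap_hasse im iinj (h1 h2)) (connect1 _).
    by rewrite /hasse_edge (top_face_dim hfm hs hd).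
  case: (hcov z) => [[u eu]|[v ev]|ez]; last 1 first.
  + by rewrite ez eqxx in ztop.
  + by exists u.
  + subst z; have hv := nocof jm jinj hrV hfp hdis.
    have hs := sdim_ne (in_setT v); have hle := sdim_le hs (in_setT v).
    move: hle; rewrite leq_eqVlt => /orP [/eqP hd|hlt].
      case: (disjF (x := top) hdis); first by rewrite incofaces (top_face_dim hfp hs hd).
      by rewrite in_cl1 below_refl.
    have hD : v \in Delta false (Posz (dim v)) [set: V] by rewrite inDelta in_setT eqxx.
    have hb := round_Delta hrV hs hlt hD.
    rewrite -hphi in hb; case/imsetP: hb => u hu ev.
    by exists u; subst v; symmetry; apply/hij.
Qed.

Lemma regmol_A (P : ogposet) : regmol P -> Aprop P.
Proof.
elim => {P}.
- move=> P hP x z _.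
  have e : z = x by move/eqP: hP; rewrite eqn_leq => /andP [/fintype_le1P h _]; rewrite (h x).
  by subst z; split=> _; apply: connect0.
- move=> P Q f [g [fK gK fm gm]] _ IH x.
  by rewrite -[x]gK; apply: (A_transport fm (can_inj fK) IH).
- move=> k U V W i j _ IHU _ IHV _ _ [[im iinj] [jm jinj] [phi [_ _ hcov]]] x.
  case: (hcov x) => [[u <-]|[v <-]].
  + exact: (A_transport im iinj IHU).
  + exact: (A_transport jm jinj IHV).
- move=> U V W i j top _ IHU _ IHV hrU hrV hsd hinc x.
  have hinc' := hinc; case: hinc' => [[im iinj] [jm jinj] [phi [_ _ _ hcov _]]].
  case: (hcov x) => [[u <-]|[v <-]|->].
  + exact: (A_transport im iinj IHU).
  + exact: (A_transport jm jinj IHV).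
  + exact: (A_top IHU IHV hrU hrV hsd hinc).
Qed.

Lemma flow_hasse (P : ogposet) (hA : Aprop P) (k : nat) (x y : P) :
  x \in flow_vert (Posz k) [set: P] -> flow_edge (Posz k) x y ->
  exists2 x', hasse_edge x x' & connect (@hasse_edge P) x' y.
Proof.
rewrite inE in_setT ltz_nat /= => hk /set0Pn [z]; rewrite in_setI /DeltaK !inDelta.
case/andP => /and3P [hzx /eqP [hdz] hd1] /and3P [hzy _ hd2].
have [h1 _] := hA x z hzx; have [_ h2] := hA y z hzy.
move: (h1 hd1) => /connectP [[|a p] pth ez].
  by subst z; move: hk; rewrite hdz ltnn.
case/andP: pth => ha pth; exists a => //.
apply: connect_trans (h2 hd2); apply/connectP; by exists p.
Qed.

Lemma dimwise_of_A (P : ogposet) : Aprop P -> og_acyclic P -> dimwise_acyclic P.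
Proof.
move=> hA hac k.
have key : forall p x, x \in flow_vert (Posz k) [set: P] -> all (mem (flow_vert (Posz k) [set: P])) p ->
    path (flow_edge (Posz k)) x p -> connect (@hasse_edge P) x (last x p).
  elim => [|a p IH] x hx /=; first by rewrite connect0.
  case/andP => ha hp /andP [e1 e2].
  have [x' h1 h2] := flow_hasse hA hx e1.
  exact: connect_trans (connect_trans (connect1 h1) h2) (IH _ ha hp e2).
move=> x [|a p] hx hp //= /andP [e1 e2] hl.
have [x' h1 h2] := flow_hasse hA hx e1.
move: hp => /= /andP [ha hp].
have := connect_trans h2 (key _ _ ha hp e2); rewrite hl => /connectP [q qp eq].
have := hac x (x' :: q) (in_setT x) _ _ _.
move=> /(_ _ _ _) H; suff : x' :: q = [::] by [].
apply: H.
- by apply/allP => w _; rewrite /= in_setT.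
- by rewrite /= h1.
- by rewrite /= -eq.
Qed.

Section Sub.
Variables (P : ogposet) (V : {set P}) (hV : closed V).

Lemma sub_faces (x y : sub_og hV) : (y \in faces x) = (val y \in faces (val x)).
Proof. by rewrite /faces !in_setU /= /subface !inE. Qed.

Lemma sub_below (x y : sub_og hV) : below x y = below (val x) (val y).
Proof.
apply/idP/idP.
- rewrite /below; apply: (connect_map (f := val)) => u v.
  by rewrite /frel sub_faces.
- rewrite /below => /connectP [p pth el].
  elim: p y pth el => [|a p IH] y /=.
    by move=> _ /val_inj ->; apply: connect0.
  case/andP => ha pth el.
  have haV : a \in V.
    apply: (subsetP hV); apply/clP; exists (val y); first exact: valP.
    exact: below_faceW.
  have := IH (exist _ a haV) pth el => h.
  apply: connect_trans h; apply: connect1.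
  by rewrite /= sub_faces.
Qed.

Lemma sub_Delta a (k : int) (x z : sub_og hV) :
  z \in DeltaK a k x -> val z \in DeltaK a k (val x).
Proof.
rewrite /DeltaK !inDelta => /and3P [hzx hdz hdis].
rewrite in_cl1 -sub_below -in_cl1 hzx /=; apply/andP; split; first exact: hdz.
apply: disjI => w hw; rewrite in_cl1 => hwx.
have hwV : w \in V.
  apply: (subsetP hV); apply/clP; exists (val x); first exact: valP.
  exact: hwx.
apply: (disjF (x := (exist _ w hwV : sub_og hV)) hdis).
  by move: hw; rewrite !inE.
by rewrite in_cl1 sub_below.
Qed.

End Sub.

Lemma frame_of_dimwise (P : ogposet) : dimwise_acyclic P -> frame_acyclic P.
Proof.
move=> hd V hV _; rewrite /M_frdim_acyclic.
case: (frdim [set: sub_og hV]) => [k|k] x p hx hp hpath hl.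
- have hv : forall w : sub_og hV, w \in flow_vert (Posz k) (maxel [set: sub_og hV]) ->
      val w \in flow_vert (Posz k) [set: P].
    by move=> w; rewrite !inE => /andP [_ h].
  have := hd k (val x) (map val p) (hv _ hx) _ _ _.
  move=> /(_ _ _ _) H.
  suff : map val p = [::] by case: (p).
  apply: H.
  + by apply/allP => w /mapP [w' hw' ->]; apply: hv; move/allP: hp => /(_ _ hw').
  + move: hpath; clear hp hl hx; elim: p x => [|a p IH] x //= /andP [e1 e2].
    rewrite IH // andbT.
    case/set0Pn: e1 => z; rewrite in_setI => /andP [h1 h2].
    apply/set0Pn; exists (val z); rewrite in_setI !sub_Delta //.
  + by rewrite last_map hl.
- case: p hp hpath hl => [//|a p] _ /= /andP [e1 _] _.
  case/set0Pn: e1 => z; rewrite in_setI /DeltaK inDelta => /andP [/and3P [_ h _] _].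
  by [].
Qed.

Theorem lemma3p39 (U : ogposet) :
  regmol U ->
  (og_acyclic U -> dimwise_acyclic U) /\ (dimwise_acyclic U -> frame_acyclic U).
Proof.
move=> hU; split; first exact: dimwise_of_A (regmol_A hU).
exact: frame_of_dimwise.
Qed.
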